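(* Let $q\in AC_{loc}(\mathbb{R}_+)$ be complex-valued and suppose there are constants $C_1,C_2>0$ such that $|q(x)|>C_1$ and $|q'(x)/q^{3/2}(x)|<C_2$ for a.e. $x\ge0$. Then every solution $y$ of $-y''+q(x)y=0$ on $\mathbb{R}_+$ with $y\in L_2(\mathbb{R}_+)$ satisfies $y'/|q|^{1/2}\in L_2(\mathbb{R}_+)$.
   Context: $\mathbb{R}_+=[0,+\infty)$; $AC_{loc}$ denotes locally absolutely continuous functions; $|q^{3/2}|=|q|^{3/2}$. *)

(* Defs.v *)
From HB Require Import structures.
From mathcomp Require Import all_boot all_order all_algebra.
From mathcomp Require Import all_classical all_reals all_analysis.
From mathcomp Require Import complex.
Set Implicit Arguments. Unset Strict Implicit. Unset Printing Implicit Defensive.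
Import Order.TTheory GRing.Theory Num.Theory.
Local Open Scope ring_scope.
Local Open Scope classical_set_scope.

Definition cabs {R : realType} (z : R[i]) : R :=
  Num.sqrt (complex.Re z ^+ 2 + complex.Im z ^+ 2).

Definition abs_cont_on {R : realType} (a b : R) (f : R -> R) : Prop :=
  forall e : R, 0 < e -> exists2 d : R, 0 < d &
    forall (n : nat) (s t : 'I_n -> R),
      (forall k, a <= s k /\ s k <= t k /\ t k <= b) ->
      (forall i j, i != j -> t i <= s j \/ t j <= s i) ->
      \sum_(k < n) (t k - s k) < d ->
      \sum_(k < n) `|f (t k) - f (s k)| < e.

Definition AC_loc_Rplus {R : realType} (f : R -> R[i]) : Prop :=
  forall b : R, 0 < b ->
    abs_cont_on 0 b (fun x => complex.Re (f x)) /\ abs_cont_on 0 b (fun x => complex.Im (f x)).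

Definition cderiv_at {R : realType} (f : R -> R[i]) (x : R) (df : R[i]) : Prop :=
  is_derive x (1:R) (fun t => complex.Re (f t)) (complex.Re df) /\
  is_derive x (1:R) (fun t => complex.Im (f t)) (complex.Im df).

Definition L2_Rplus {R : realType} (f : R -> R[i]) : Prop :=
  measurable_fun `[(0%R:R), +oo[ (fun x => complex.Re (f x)) /\
  measurable_fun `[(0%R:R), +oo[ (fun x => complex.Im (f x)) /\
  (\int[@lebesgue_measure R]_(x in `[(0%R:R), +oo[) ((cabs (f x)) ^+ 2)%:E < +oo)%E.

(* Main.v *)
Require Import Defs.
From HB Require Import structures.
From mathcomp Require Import all_boot all_order all_algebra.
From mathcomp Require Import all_classical all_reals all_analysis.
From mathcomp Require Import complex.
From mathcomp Require Import ring lra measurable_realfun.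
Import Order.TTheory GRing.Theory Num.Theory.
Import numFieldNormedType.Exports.
Local Open Scope ring_scope.
Local Open Scope classical_set_scope.
Set Implicit Arguments. Unset Strict Implicit. Unset Printing Implicit Defensive.

Section AC.
Context {R : realType}.
Implicit Types (a b : R) (f g : R -> R).

Lemma ac_ucont a b f : abs_cont_on a b f ->
  forall e : R, 0 < e -> exists2 d : R, 0 < d &
   forall x t, a <= x <= b -> a <= t <= b -> `|t - x| < d -> `|f t - f x| < e.
Proof.
move=> ac e e0; have [d d0 H] := ac e e0; exists d => // x t /andP[ax xb] /andP[aT tb] tx.
pose s := fun _ : 'I_1 => Num.min t x; pose u := fun _ : 'I_1 => Num.max t x.
have := H 1%N s u; rewrite !big_ord1 /s /u.
have [tx'|tx'] := leP t x.
- rewrite distrC; apply.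
  + by move=> _; lra.
  + by move=> i j; rewrite !ord1.
  + by rewrite distrC ger0_norm ?subr_ge0 in tx.
- apply.
  + by move=> _; lra.
  + by move=> i j; rewrite !ord1.
  + by rewrite ger0_norm ?subr_ge0 ?(ltW tx') in tx.
Qed.


Lemma ac_ctrl a b f g F (K : R) : 0 < K -> abs_cont_on a b f -> abs_cont_on a b g ->
  (forall s t, a <= s <= b -> a <= t <= b ->
     `|F t - F s| <= K * (`|f t - f s| + `|g t - g s|)) -> abs_cont_on a b F.
Proof.
move=> K0 af ag HF e e0.
set c := e / (2 * K).
have c0 : 0 < c by rewrite /c divr_gt0 // mulr_gt0.
have hc : K * c * 2 = e by rewrite /c; field; rewrite gt_eqF.
have [d1 d10 H1] := af _ c0; have [d2 d20 H2] := ag _ c0.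
exists (Num.min d1 d2); first by rewrite lt_min d10.
move=> n s t st dj sum.
have m1 : Num.min d1 d2 <= d1 by rewrite ge_min lexx.
have m2 : Num.min d1 d2 <= d2 by rewrite ge_min lexx orbT.
have s1 := H1 n s t st dj (lt_le_trans sum m1).
have s2 := H2 n s t st dj (lt_le_trans sum m2).
have HF' : forall k : 'I_n, true ->
   `|F (t k) - F (s k)| <= K * (`|f (t k) - f (s k)| + `|g (t k) - g (s k)|).
  move=> k _; have [h1 [h2 h3]] := st k; apply: HF; apply/andP; split; lra.
apply: (le_lt_trans (ler_sum _ HF')).
rewrite -mulr_sumr big_split /=.
set A := \sum_(i < n) _ in s1 *; set B := \sum_(i < n) _ in s2 *.
nra.
Qed.

Lemma ac_id a b : abs_cont_on a b id.
Proof.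
move=> e e0; exists e => // n s t st _ sum.
apply: le_lt_trans sum; apply: ler_sum => k _.
by have [_ [h _]] := st k; rewrite ger0_norm ?subr_ge0.
Qed.

Lemma ac_lip a b F (K : R) : 0 < K ->
  (forall s t, a <= s <= b -> a <= t <= b -> `|F t - F s| <= K * `|t - s|) ->
  abs_cont_on a b F.
Proof.
move=> K0 HF; apply: (ac_ctrl (K := K) _ (ac_id a b) (ac_id a b)) => // s t hs ht.
apply: (le_trans (HF s t hs ht)); rewrite ler_pM2l //=; rewrite lerDl; exact: normr_ge0.
Qed.

Lemma ac_cst a b (c : R) : abs_cont_on a b (fun=> c).
Proof.
apply: (ac_ctrl (K := 1) _ (ac_id a b) (ac_id a b)) => // s t _ _.
by rewrite subrr normr0 mul1r addr_ge0.
Qed.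

Lemma ac_add a b f g : abs_cont_on a b f -> abs_cont_on a b g ->
  abs_cont_on a b (fun x => f x + g x).
Proof.
move=> af ag; apply: (ac_ctrl (K := 1) _ af ag) => // s t _ _.
rewrite mul1r (_ : _ - _ = (f t - f s) + (g t - g s)); last by ring.
exact: ler_normD.
Qed.

Lemma ac_scale a b f (c : R) : abs_cont_on a b f -> abs_cont_on a b (fun x => c * f x).
Proof.
move=> af; apply: (ac_ctrl (K := `|c| + 1) _ af af).
  by have := normr_ge0 c; lra.
move=> s t _ _; rewrite -mulrBr normrM.
have := normr_ge0 c; have := normr_ge0 (f t - f s); nra.
Qed.

Lemma ac_opp a b f : abs_cont_on a b f -> abs_cont_on a b (fun x => - f x).
Proof.
move=> af; have -> : (fun x => - f x) = (fun x => -1 * f x).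
  by apply: funext => x; rewrite mulN1r.
exact: ac_scale.
Qed.


Lemma ac_cont a b f : abs_cont_on a b f -> forall x, a <= x <= b ->
  forall e : R, 0 < e -> exists2 d : R, 0 < d &
   forall t, a <= t <= b -> `|t - x| < d -> `|f t - f x| < e.
Proof.
move=> ac x hx e e0; have [d d0 H] := ac_ucont ac e0.
by exists d => // t ht; apply: H.
Qed.

Lemma ac_bounded a b f : abs_cont_on a b f ->
  exists2 M : R, 0 < M & forall x, a <= x <= b -> `|f x| <= M.
Proof.
move=> ac; have [d d0 H] := ac_ucont ac ltr01.
set eta := d / 2.
have eta0 : 0 < eta by rewrite /eta divr_gt0.
have etad : eta < d by rewrite /eta; lra.
have claim : forall n : nat, forall x, a <= x <= b -> x - a <= n%:R * eta ->
    `|f x - f a| <= n%:R.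
  elim=> [|n IH] x /andP[ax xb] hx.
    have -> : x = a by rewrite mul0r in hx; lra.
    by rewrite subrr normr0.
  have [hn|hn] := lerP (x - a) (n%:R * eta).
    by apply: (le_trans (IH x _ hn)); [lra | rewrite ler_nat].
  set x' := Num.max a (x - eta).
  have hx'1 : a <= x' by rewrite /x' le_max lexx.
  have hx'2 : x' <= x by rewrite /x' ge_max ax; lra.
  have hx'3 : x' - a <= n%:R * eta.
    rewrite /x'; have [h|h] := leP a (x - eta).
      by rewrite -natr1 mulrDl mul1r in hx; lra.
    by rewrite subrr mulr_ge0 // ltW.
  have h1 := IH x' ltac:(apply/andP; split; lra) hx'3.
  have h2 : `|f x - f x'| < 1.
    apply: H; [apply/andP; split; lra | apply/andP; split; lra|].
    rewrite ger0_norm; last lra.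
    rewrite /x'; have [h|h] := leP a (x - eta).
      by rewrite /eta; lra.
    by rewrite /eta; lra.
  rewrite -natr1; have := ler_normD (f x - f x') (f x' - f a).
  rewrite (_ : f x - f x' + (f x' - f a) = f x - f a); last by ring.
  lra.
have ba : 0 <= (b - a) / eta \/ (b - a) / eta < 0 by case: (lerP 0 ((b - a) / eta)) => h; [left|right].
set n := Num.bound (Num.max 0 ((b - a) / eta)).
have hn : (b - a) / eta < n%:R.
  apply: le_lt_trans (archi_boundP _); first by rewrite le_max lexx orbT.
  by rewrite le_max lexx.
exists (n%:R + `|f a| + 1).
  have := normr_ge0 (f a); have : 0 <= n%:R :> R by rewrite ler0n. lra.
move=> x hx; have [ax xb] := andP hx.
have hx' : x - a <= n%:R * eta.
  rewrite -ler_pdivrMr //; apply: ltW; apply: le_lt_trans hn.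
  by rewrite ler_pM2r ?invr_gt0 //; lra.
have := claim n x hx hx'.
have := ler_normD (f x - f a) (f a); rewrite subrK; lra.
Qed.

Lemma ac_mul a b f g : abs_cont_on a b f -> abs_cont_on a b g ->
  abs_cont_on a b (fun x => f x * g x).
Proof.
move=> af ag; have [Mf Mf0 hf] := ac_bounded af; have [Mg Mg0 hg] := ac_bounded ag.
apply: (ac_ctrl (K := Mf + Mg) _ af ag); first lra.
move=> s t hs ht.
rewrite (_ : f t * g t - f s * g s = f t * (g t - g s) + g s * (f t - f s)); last by ring.
apply: (le_trans (ler_normD _ _)); rewrite !normrM.
have := hf t ht; have := hg s hs; have := normr_ge0 (f t); have := normr_ge0 (g s).
have := normr_ge0 (g t - g s); have := normr_ge0 (f t - f s).
nra.
Qed.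

Lemma ac_comp a b f (phi : R -> R) (S : set R) (K : R) : 0 < K ->
  abs_cont_on a b f -> (forall x, a <= x <= b -> S (f x)) ->
  (forall u v, S u -> S v -> `|phi u - phi v| <= K * `|u - v|) ->
  abs_cont_on a b (fun x => phi (f x)).
Proof.
move=> K0 af fS hphi; apply: (ac_ctrl (K := K) K0 af af) => s t hs ht.
apply: (le_trans (hphi _ _ (fS _ ht) (fS _ hs))).
rewrite ler_pM2l // lerDl; exact: normr_ge0.
Qed.
Lemma deriv_right_le (f : R -> R) (c dd e : R) : is_derive c 1 f dd -> 0 < e ->
  exists2 r : R, 0 < r & forall h, 0 < h < r -> f (c + h) - f c <= (dd + e) * h.
Proof.
move=> [df dv] e0.
have := df; rewrite /derivable.
move=> /cvgrPdist_lt /(_ e e0).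

move=> /nbhs_ballP [r /= r0 Hr].
exists r => // h /andP[h0 hr].
have := Hr h.
rewrite -[lim _]/('D_1 f c) dv.
have -> : h%:A = h by rewrite /GRing.scale /= mulr1.
have hb : ball 0 r h by rewrite /ball /= sub0r normrN gtr0_norm.
have hn : h != 0 by rewrite gt_eqF.
move=> /(_ hb hn); rewrite distrC => /(le_lt_trans (ler_norm _)) hq.
rewrite [c + h]addrC.
have -> : f (h + c) - f c = h * (h^-1 *: (f (h + c) - f c)).
  by rewrite /GRing.scale /= mulrA mulrV ?mul1r // unitfE.
set Q := h^-1 *: _ in hq *.
nra.
Qed.

End AC.

Section Z.
Context {R : realType}.
Local Notation mu := (@lebesgue_measure R).

Lemma ac_nonincr (a b : R) (f : R -> R) (N : set R) : a <= b -> abs_cont_on a b f ->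
  measurable N -> mu N = 0%E ->
  (forall x, a < x < b -> ~ N x -> exists2 d, d <= 0 & is_derive x 1 f d) -> f b <= f a.
Proof.
move=> ab ac mN N0 hd.
suff H : forall e, 0 < e -> f b <= f a + e * (b - a + 1).
  apply/ler_addgt0Pr => e e0.
  have k0 : 0 < b - a + 1 by lra.
  have := H (e / (b - a + 1)) (divr_gt0 e0 k0).
  by rewrite divfK ?gt_eqF.
move=> e e0.
have [d d0 Hac] := ac e e0.
pose N' := N `|` [set a].
have mN' : measurable N' by apply: measurableU => //; exact: measurable_set1.
have N'0 : mu N' = 0%E.
  apply/eqP; rewrite eq_le measure_ge0 andbT.
  have h0 : (mu N + mu [set a] <= 0)%E by rewrite N0 lebesgue_measure_set1 adde0.
  exact: (le_trans (measureU2 mu mN (measurable_set1 a)) h0).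
have fin : (mu N' < +oo)%E by rewrite N'0 ltry.
have [U [oU N'U UN]] := lebesgue_regularity_outer mN' fin d0.
have mU : measurable U by exact: open_measurable.
have muU : (mu U < d%:E)%E.
  rewrite -(setDKU N'U).
  have h0 : (mu (U `\` N') + mu N' < d%:E)%E by rewrite N'0 adde0.
  exact: (le_lt_trans (measureU2 mu (measurableD mU mN') mN') h0).
pose fam (x : R) := [set v : R | exists n (s t : nat -> R),
  [/\ forall k, (k < n)%N -> a <= s k /\ s k <= t k /\ t k <= x,
      forall i j, (i < n)%N -> (j < n)%N -> i != j -> t i <= s j \/ t j <= s i,
      forall k, (k < n)%N -> `]s k, t k] `<=` U &
      v = \sum_(k < n) (f (t k) - f (s k))]].
have famlt : forall x v, x <= b -> fam x v -> v < e.
  move=> x v xb [n [s [t [st dj sU ->]]]].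
  have len : \sum_(k < n) (t k - s k) < d.
    rewrite -lte_fin -sumEFin.
    have -> : (\sum_(k < n) (t k - s k)%:E = \sum_(k < n) mu `]s k, t k])%E.
      apply: eq_bigr => k _; rewrite lebesgue_measure_itv /= lte_fin.
      have [_ [h _]] := st k (ltn_ord k).
      case: ltP => h'; first by rewrite EFinB.
      have e1 : t k = s k by lra.
      by rewrite e1 subrr.
    rewrite -(@measure_semi_additive_ord_I _ _ _ mu (fun k => `]s k, t k]%classic) n).
    - apply: le_lt_trans muU; apply: le_measure; rewrite ?inE.
      + by apply: bigsetU_measurable => k _.
      + exact: mU.
      + apply: (big_ind (fun X => X `<=` U)) => //.
          by move=> X Y hX hY z [/hX|/hY].
        move=> k _; exact: sU.
    - by move=> k _.
    - move=> i j /= il jl [z [zi zj]]; apply/eqP; apply: contraT => ij.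
      move: zi zj; rewrite /= !in_itv /= => /andP[? ?] /andP[? ?].
      by case: (dj i j il jl ij) => ?; lra.
    - by apply: bigsetU_measurable => k _.
  apply: (le_lt_trans (ler_sum _ (fun k _ => ler_norm _))).
  apply: (Hac n (fun k : 'I_n => s k) (fun k : 'I_n => t k)) => //.
  - move=> k; have [? [? ?]] := st k (ltn_ord k); split => //; split => //; lra.
  - move=> i j ij; apply: dj => //; exact: ltn_ord.
have fam0 : forall x, fam x 0.
  move=> x; exists 0%N, (fun=> 0), (fun=> 0); split => //; by rewrite big_ord0.
have famS : forall x y, x <= y -> fam x `<=` fam y.
  move=> x y xy v [n [s [t [st dj sU ->]]]]; exists n, s, t; split => // k kn.
  have [? [? ?]] := st k kn; split => //; split => //; lra.
have hasV : forall x, x <= b -> has_sup (fam x).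
  move=> x xb; split; first by exists 0.
  by exists e => v /(famlt x v xb) /ltW.
pose V x := sup (fam x).
have V0 : forall x, x <= b -> 0 <= V x.
  by move=> x xb; exact: sup_upper_bound (hasV x xb) _ (fam0 x).
have Ve : forall x, x <= b -> V x <= e.
  move=> x xb; apply: ge_sup; first by exists 0; exact: fam0.
  by move=> v /(famlt x v xb) /ltW.
have Vmono : forall x y, x <= y -> y <= b -> V x <= V y.
  move=> x y xy yb; apply: ge_sup; first by exists 0; exact: fam0.
  move=> v /(famS _ _ xy) fv; exact: sup_upper_bound (hasV y yb) _ fv.
have Vext : forall x t, a <= x -> x <= t -> t <= b -> `]x, t] `<=` U ->
    V x + (f t - f x) <= V t.
  move=> x t ax xt tb xtU.
  rewrite -lerBrDr.
  apply: ge_sup; first by exists 0; exact: fam0.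
  move=> v [n [s [t' [st dj sU ->]]]]; rewrite lerBrDr.
  apply: sup_upper_bound (hasV t tb) _ _.
  exists n.+1, (fun k => if k == n then x else s k),
    (fun k => if k == n then t else t' k); split.
  - move=> k kn; have [ekn|nkn] := eqVneq k n; first by split; lra.
    have kn' : (k < n)%N by rewrite ltn_neqAle nkn -ltnS.
    have [? [? ?]] := st k kn'; split => //; split => //; lra.
  - move=> i j il jl ij.
    have [ein|nin] := eqVneq i n; have [ejn|njn] := eqVneq j n.
    + by rewrite ein ejn eqxx in ij.
    + have jn : (j < n)%N by rewrite ltn_neqAle njn -ltnS.
      have [? [? ?]] := st j jn; right; lra.
    + have iN : (i < n)%N by rewrite ltn_neqAle nin -ltnS.
      have [? [? ?]] := st i iN; left; lra.
    + have iN : (i < n)%N by rewrite ltn_neqAle nin -ltnS.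
      have jn : (j < n)%N by rewrite ltn_neqAle njn -ltnS.
      exact: dj.
  - move=> k kn; have [ekn|nkn] := eqVneq k n; first exact: xtU.
    have kn' : (k < n)%N by rewrite ltn_neqAle nkn -ltnS.
    exact: sU.
  - rewrite big_ord_recr /= eqxx; congr (_ + _); apply: eq_bigr => k _.
    by rewrite (ltn_eqF (ltn_ord k)).
pose P x := f x <= f a + e * (x - a) + V x.
pose S := [set x | a <= x <= b /\ forall t, a <= t <= x -> P t].
have Pa : P a by rewrite /P subrr mulr0 addr0 lerDl V0.
have Sa : S a.
  split; first by rewrite lexx ab.
  move=> t /andP[? ?]; have -> : t = a by lra.
  exact: Pa.
have hasS : has_sup S.
  by split; [exists a | exists b => x [/andP[_ ?] _]].
set c := sup S.
have ac' : a <= c by apply: sup_upper_bound hasS _ Sa.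
have cb : c <= b by apply: ge_sup; [exists a | move=> x [/andP[_ ?] _]].
have below : forall t, a <= t -> t < c -> P t.
  move=> t aT tc.
  have [x Sx ltx] := sup_adherent (eps := c - t) ltac:(by rewrite subr_gt0) hasS.
  rewrite -/c in ltx; case: Sx => _ Hx; apply: Hx; apply/andP; split => //; lra.
have Pc : P c.
  have [ca|ac2] := eqVneq c a; first by rewrite ca.
  have ac3 : a < c by rewrite lt_neqAle eq_sym ac2 ac'.
  rewrite /P; case: (lerP (f c) (f a + e * (c - a) + V c)) => // hlt.
  have g0 : 0 < f c - (f a + e * (c - a) + V c) by rewrite subr_gt0.
  have [d' d'0 Hd'] := ac_cont ac (x:=c) ltac:(apply/andP; split; lra) g0.
  set t := Num.max a (c - d' / 2).
  have ta : a <= t by rewrite le_max lexx.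
  have tc : t < c by rewrite /t; have [h|h] := leP a (c - d' / 2); lra.
  have tdist : `|t - c| < d'.
    rewrite distrC ger0_norm ?subr_ge0 ?(ltW tc) //.
    by rewrite /t; have [h|h] := leP a (c - d' / 2); lra.
  have Pt := below t ta tc.
  have := Hd' t ltac:(apply/andP; split; lra) tdist.
  rewrite distrC => /(le_lt_trans (ler_norm _)) hft.
  have Vtc := Vmono t c (ltW tc) cb.
  have et : e * (t - a) <= e * (c - a) by rewrite ler_pM2l //; lra.
  rewrite /P in Pt; lra.
have cb' : c = b.
  apply/eqP; rewrite eq_le cb /= leNgt; apply/negP => cltb.
  have [r r0 Hr] : exists2 r, 0 < r &
      forall t, c < t -> t <= c + r -> t <= b -> P t.
    have [Nc|Nc] := pselect (N' c).
    - have : nbhs c U by apply: open_nbhs_nbhs; split => //; exact: N'U.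
      move=> /nbhs_ballP [r /= r0 Hr]; exists (r / 2); first by rewrite divr_gt0.
      move=> t ct tcr tb.
      have sub : `]c, t] `<=` U.
        move=> z; rewrite /= in_itv /= => /andP[cz zt]; apply: Hr.
        by rewrite /ball /= distrC ger0_norm; lra.
      have := Vext c t ac' (ltW ct) tb sub.
      have et : e * (c - a) <= e * (t - a) by rewrite ler_pM2l //; lra.
      rewrite /P in Pc *; lra.
    - have nNc : ~ N c by move=> h; apply: Nc; left.
      have ac3 : a < c.
        rewrite lt_neqAle ac' andbT; apply/eqP => h; apply: Nc; right; by rewrite h.
      have [dd dd0 hdd] := hd c ltac:(apply/andP; split; lra) nNc.
      have [r r0 Hr] := deriv_right_le hdd e0.
      exists (r / 2); first by rewrite divr_gt0.
      move=> t ct tcr tb.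
      have := Hr (t - c) ltac:(apply/andP; split; lra).
      have -> : c + (t - c) = t by ring.
      move=> h.
      have Vct := Vmono c t (ltW ct) tb.
      have h1 : dd * (t - c) <= 0 by rewrite mulr_le0_ge0 //; lra.
      have h2 : e * (t - a) = e * (t - c) + e * (c - a) by ring.
      have h3 : (dd + e) * (t - c) = dd * (t - c) + e * (t - c) by ring.
      rewrite /P in Pc *; lra.
  set c' := Num.min b (c + r).
  have Sc' : S c'.
    split.
      by apply/andP; split; rewrite /c'; have [h|h] := leP b (c + r); lra.
    move=> t /andP[ta tc'].
    case: (ltgtP t c) => [tlt|tgt|->]; [exact: below| |exact: Pc].
    move: tc'; rewrite /c' le_min => /andP[h1 h2].
    exact: Hr.
  have : c' <= c by apply: sup_upper_bound hasS _ Sc'.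
  by rewrite /c'; have [h|h] := leP b (c + r); lra.
have := Pc; rewrite /P cb' => Pb.
have := Ve b (lexx b).
have -> : e * (b - a + 1) = e * (b - a) + e by ring.
lra.
Qed.

End Z.

Section P3.
Context {R : realType}.
Local Notation mu := (@lebesgue_measure R).
Implicit Types (k : R -> R) (x s t B u : R).

Lemma ac_sub (a b a' b' : R) f : a <= a' -> b' <= b -> abs_cont_on a b f ->
  abs_cont_on a' b' f.
Proof.
move=> aa bb ac e e0; have [d d0 H] := ac e e0; exists d => // n s t st dj sm.
apply: H => // k; have [? [? ?]] := st k; split; [lra|split => //; lra].
Qed.

Definition cl (x : R) := Num.max x 0.

Lemma cont_eps (g : R -> R) x :
  (forall e, 0 < e -> exists2 d, 0 < d & forall t, `|t - x| < d -> `|g t - g x| < e) ->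
  {for x, continuous g}.
Proof.
move=> H; apply/cvgrPdist_lt => e e0; have [d d0 Hd] := H e e0.
apply/nbhs_ballP; exists d => // t /= ht; rewrite distrC; apply: Hd.
by rewrite distrC.
Qed.

Lemma cont_clamp f : (forall B, 0 < B -> abs_cont_on 0 B f) ->
  continuous (fun x => f (cl x)).
Proof.
move=> acf x; apply: cont_eps => e e0.
have B0 : 0 < `|x| + 1 by have := normr_ge0 x; lra.
have [d d0 Hd] := ac_ucont (acf _ B0) e0.
exists (Num.min d 1); first by rewrite lt_min d0 ltr01.
move=> t; rewrite lt_min => /andP[td t1].
have hx := ler_norm x; have hx' := ler_norm (- x); rewrite normrN in hx'.
have /andP[td1 td2] : - d < t - x < d by rewrite -ltr_norml.
have /andP[t11 t12] : - 1 < t - x < 1 by rewrite -ltr_norml.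
apply: (Hd (cl x) (cl t)); rewrite /cl.
- by have [h|h] := leP x 0; apply/andP; split; lra.
- by have [h|h] := leP t 0; apply/andP; split; lra.
- by rewrite ltr_norml; have [h|h] := leP x 0; have [h'|h'] := leP t 0;
    apply/andP; split; lra.
Qed.


Definition Kint (k : R -> R) (x : R) := Rintegral mu `[0, x] k.

Lemma kint_integrable k : continuous k -> forall u, mu.-integrable `[0, u] (EFin \o k).
Proof.
move=> kc u; apply: continuous_compact_integrable; first exact: segment_compact.
exact: continuous_subspaceT.
Qed.

Lemma kint_derive k x : continuous k -> 0 < x -> is_derive x 1 (Kint k) (k x).
Proof.
move=> kc x0.
have [d1 d2] := @continuous_FTC1_closed R k 0 x (x + 1) ltac:(lra)
  (kint_integrable kc (x + 1)) x0 (kc x).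
by apply: DeriveDef; [exact: d1 | rewrite -derive1E].
Qed.

Lemma kint_cont k B : continuous k -> 0 <= B -> {within `[0, B], continuous (Kint k)}.
Proof.
move=> kc B0; have := parameterized_integral_continuous B0 (kint_integrable kc B).
by [].
Qed.
Lemma kint_mvt k s t : continuous k -> 0 <= s -> s < t ->
  exists2 c, s < c < t & Kint k t - Kint k s = k c * (t - s).
Proof.
move=> kc s0 st.
have hd : forall x, x \in `]s, t[%R -> is_derive x 1 (Kint k) (k x).
  move=> x xin; have /andP[sx xt] : s < x < t by move: xin; rewrite ?inE /= ?in_itv.
  apply: kint_derive => //; lra.
have sub : `[s, t] `<=` `[0, t].
  move=> x; rewrite /= ?in_itv /= => /andP[? ?]; rewrite ?in_itv /=.
  by apply/andP; split => //; lra.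
have hc := continuous_subspaceW sub (kint_cont kc (ltW (le_lt_trans s0 st))).
have [c cin eq] := MVT st hd hc.
by exists c => //; move: cin; rewrite in_itv.
Qed.

Lemma kint_mono k s t : continuous k -> (forall x, 0 <= k x) -> 0 <= s -> s <= t ->
  Kint k s <= Kint k t.
Proof.
move=> kc k0 s0; rewrite le_eqVlt => /orP[/eqP->//|st].
have [c _ eq] := kint_mvt kc s0 st.
rewrite -subr_ge0 eq; apply: mulr_ge0 => //; lra.
Qed.

Lemma kint_ac k B : continuous k -> (forall x, 0 <= k x) -> 0 < B ->
  abs_cont_on 0 B (Kint k).
Proof.
move=> kc k0 B0.
have [c cin cmax] := EVT_max (ltW B0) (continuous_subspaceT (A := `[0, B]) kc).
apply: (ac_lip (K := k c + 1)); first by have := k0 c; lra.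
have key : forall u v, 0 <= u -> u < v -> v <= B ->
    `|Kint k v - Kint k u| <= (k c + 1) * `|v - u|.
  move=> u v u0 uv vB; have [c' /andP[? ?] ->] := kint_mvt kc u0 uv.
  rewrite normrM (ger0_norm (k0 c')) (ger0_norm (x := v - u)); last lra.
  have : k c' <= k c by apply: cmax; rewrite in_itv /=; apply/andP; split; lra.
  have := k0 c'; nra.
move=> s t /andP[s0 sB] /andP[t0 tB].
case: (ltgtP s t) => [st|ts|->].
- exact: key.
- by rewrite distrC (distrC t s); apply: key.
- by rewrite !subrr normr0 mulr0.
Qed.

Lemma kint_ge0 k x : (forall x, 0 <= k x) -> 0 <= Kint k x.
Proof. by move=> k0; apply: Rintegral_ge0 => y _. Qed.

Lemma kint_E k x : continuous k ->
  (Kint k x)%:E = (\int[mu]_(t in `[0%R, x]) (k t)%:E)%E.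
Proof.
move=> kc; rewrite /Kint /Rintegral fineK //.
by apply: integrable_fin_num => //; exact: kint_integrable.
Qed.
End P3.

Section P4.
Context {R : realType}.
Local Notation mu := (@lebesgue_measure R).
Implicit Types (k : R -> R) (x s t B u : R).

Lemma cont_eps_inv (g : R -> R) x : {for x, continuous g} ->
  forall e, 0 < e -> exists2 d, 0 < d & forall t, `|t - x| < d -> `|g t - g x| < e.
Proof.
move=> gc e e0; move/cvgrPdist_lt: gc => /(_ e e0) /nbhs_ballP [d d0 H].
exists d => // t td; rewrite distrC; apply: H; by rewrite /ball /= distrC.
Qed.

Lemma cont_sq (f : R -> R) x : {for x, continuous f} ->
  {for x, continuous (fun t => f t ^+ 2)}.
Proof.
move=> fc; have -> : (fun t => f t ^+ 2) = (fun t => f t * f t).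
  by apply: funext => t; rewrite expr2.
exact: (cvgM fc fc).
Qed.

Lemma lowerbound (qr qi : R -> R) (C1 : R) (N : set R) : 0 < C1 ->
  (forall B, 0 < B -> abs_cont_on 0 B qr) -> (forall B, 0 < B -> abs_cont_on 0 B qi) ->
  measurable N -> mu N = 0%E ->
  (forall x, 0 <= x -> ~ N x -> C1 < Num.sqrt (qr x ^+ 2 + qi x ^+ 2)) ->
  forall x, 0 <= x -> C1 ^+ 2 <= qr x ^+ 2 + qi x ^+ 2.
Proof.
move=> C10 acr aci mN N0 hN x x0; rewrite leNgt; apply/negP => hlt.
have sc : continuous (fun t => qr (cl t) ^+ 2 + qi (cl t) ^+ 2).
  move=> t.
  have h1 : {for t, continuous (fun t => qr (cl t) ^+ 2)} by apply: cont_sq; apply: cont_clamp.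
  have h2 : {for t, continuous (fun t => qi (cl t) ^+ 2)} by apply: cont_sq; apply: cont_clamp.
  exact: (cvgD h1 h2).
have e0 : 0 < C1 ^+ 2 - (qr x ^+ 2 + qi x ^+ 2) by rewrite subr_gt0.
have [d d0 Hd] := cont_eps_inv (sc x) e0.
have sub : `[x, x + d[ `<=` N.
  move=> t; rewrite /= in_itv /= => /andP[xt td].
  have [//|nN] := pselect (N t).
  have := Hd t; rewrite ger0_norm ?subr_ge0 // => /(_ ltac:(lra)).
  rewrite /cl (max_l x0) (max_l (le_trans x0 xt)) => /(le_lt_trans (ler_norm _)) h.
  have := hN t (le_trans x0 xt) nN.
  have := sqrtr_ge0 (qr t ^+ 2 + qi t ^+ 2).
  have := @sqr_sqrtr _ (qr t ^+ 2 + qi t ^+ 2) ltac:(by rewrite addr_ge0 ?sqr_ge0).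
  set r := Num.sqrt _ => hr r0 C1r.
  nra.
have : (mu `[x, (x + d)%R[ <= mu N)%E.
  apply: le_measure => //; rewrite inE //; exact: measurable_itv.
rewrite N0 lebesgue_measure_itv /= lte_fin ltrDl d0 -EFinD addrAC subrr add0r lee_fin.
lra.
Qed.

End P4.

Section P5.
Context {R : realType}.

Lemma poly_ineq (a ww qr qi dqr dqi yr yi pr pi C2 : R) :
  0 < a -> ww * a = 1 -> a ^+ 2 = qr ^+ 2 + qi ^+ 2 ->
  dqr ^+ 2 + dqi ^+ 2 <= C2 ^+ 2 * a ^+ 3 ->
  3 / 4 * ((pr ^+ 2 + pi ^+ 2) * ww)
   - (ww * ((pr ^+ 2 + pi ^+ 2) + qr * (yr ^+ 2 + yi ^+ 2))
      + (pr * yr + pi * yi) * (- ww ^+ 3 * (qr * dqr + qi * dqi)))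
   - (C2 ^+ 2 + 1) * (yr ^+ 2 + yi ^+ 2) <= 0.
Proof.
move=> a0 wa a2 hm.
have ww0 : 0 < ww by nra.
set P := pr ^+ 2 + pi ^+ 2; set g := yr ^+ 2 + yi ^+ 2.
set D := qr * dqr + qi * dqi; set Rf := pr * yr + pi * yi.
set m := dqr ^+ 2 + dqi ^+ 2.
have P0 : 0 <= P by rewrite /P addr_ge0 ?sqr_ge0.
have g0 : 0 <= g by rewrite /g addr_ge0 ?sqr_ge0.
have f1 : (ww * qr) ^+ 2 <= 1.
  have : ww ^+ 2 * a ^+ 2 = 1 by rewrite -exprMn wa expr1n.
  rewrite a2 exprMn => h; rewrite -h; have := sqr_ge0 qi; have := sqr_ge0 ww; nra.
have f2 : - (ww * qr) * g <= g.
  have : - (ww * qr) <= 1 by nra.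
  nra.
have f3 : D ^+ 2 <= a ^+ 2 * m.
  rewrite a2 /D /m; have := sqr_ge0 (qr * dqi - qi * dqr); nra.
have wa5 : ww ^+ 6 * a ^+ 5 = ww.
  have -> : ww ^+ 6 * a ^+ 5 = (ww * a) ^+ 5 * ww by ring.
  by rewrite wa expr1n mul1r.
have f4 : (ww ^+ 3 * D) ^+ 2 <= C2 ^+ 2 * ww.
  have e1 : (ww ^+ 3 * D) ^+ 2 = ww ^+ 6 * D ^+ 2 by ring.
  have w6 : 0 <= ww ^+ 6 by rewrite exprn_ge0 // ltW.
  have : ww ^+ 6 * D ^+ 2 <= ww ^+ 6 * (a ^+ 2 * m) by rewrite ler_wpM2l.
  have : ww ^+ 6 * (a ^+ 2 * m) <= ww ^+ 6 * (a ^+ 2 * (C2 ^+ 2 * a ^+ 3)).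
    by rewrite ler_wpM2l // ler_wpM2l // sqr_ge0.
  have e2 : ww ^+ 6 * (a ^+ 2 * (C2 ^+ 2 * a ^+ 3)) = C2 ^+ 2 * (ww ^+ 6 * a ^+ 5) by ring.
  rewrite e1 e2 wa5; lra.
have f5 : Rf ^+ 2 <= P * g.
  rewrite /Rf /P /g; have := sqr_ge0 (pr * yi - pi * yr); nra.
set X := ww ^+ 3 * D * Rf.
have f6 : X ^+ 2 <= C2 ^+ 2 * (P * ww) * g.
  have e1 : X ^+ 2 = (ww ^+ 3 * D) ^+ 2 * Rf ^+ 2 by rewrite /X; ring.
  rewrite e1.
  have h1 : (ww ^+ 3 * D) ^+ 2 * Rf ^+ 2 <= (C2 ^+ 2 * ww) * Rf ^+ 2.
    by rewrite ler_wpM2r // sqr_ge0.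
  have h2 : (C2 ^+ 2 * ww) * Rf ^+ 2 <= (C2 ^+ 2 * ww) * (P * g).
    by rewrite ler_wpM2l // mulr_ge0 // ?sqr_ge0 // ltW.
  have e2 : (C2 ^+ 2 * ww) * (P * g) = C2 ^+ 2 * (P * ww) * g by ring.
  lra.
set h := P * ww.
have h0 : 0 <= h by rewrite /h mulr_ge0 // ltW.
have f7 : X <= h / 4 + C2 ^+ 2 * g.
  have T0 : 0 <= h / 4 + C2 ^+ 2 * g.
    have : 0 <= C2 ^+ 2 * g by rewrite mulr_ge0 // sqr_ge0.
    lra.
  have hT : C2 ^+ 2 * h * g <= (h / 4 + C2 ^+ 2 * g) ^+ 2.
    have := sqr_ge0 (h / 4 - C2 ^+ 2 * g); nra.
  have e6 : C2 ^+ 2 * (P * ww) * g = C2 ^+ 2 * h * g by [].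
  move: T0 hT; set T := h / 4 + C2 ^+ 2 * g => T0 hT.
  have hX : X ^+ 2 <= T ^+ 2 by lra.
  nra.
have eqE : 3 / 4 * h - (ww * (P + qr * g) + Rf * (- ww ^+ 3 * D)) - (C2 ^+ 2 + 1) * g
  = - (h / 4) + (- (ww * qr) * g) + X - (C2 ^+ 2 + 1) * g.
  rewrite /X /h; field.
  by [].
rewrite eqE; lra.
Qed.


Lemma sqrt_lb (C1 u : R) : 0 < C1 -> C1 ^+ 2 <= u -> C1 <= Num.sqrt u.
Proof.
move=> C10 hu; have := sqrtr_ge0 u.
have := @sqr_sqrtr _ u ltac:(have := sqr_ge0 C1; lra).
set a := Num.sqrt u => ha a0; nra.
Qed.

Lemma invsqrt_lip (C1 u v : R) : 0 < C1 -> C1 ^+ 2 <= u -> C1 ^+ 2 <= v ->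
  `|(Num.sqrt u)^-1 - (Num.sqrt v)^-1| <= (C1 ^+ 3)^-1 * `|u - v|.
Proof.
move=> C10 hu hv.
have u0 : 0 <= u by have := sqr_ge0 C1; lra.
have v0 : 0 <= v by have := sqr_ge0 C1; lra.
have ha := sqrt_lb C10 hu; have hb := sqrt_lb C10 hv.
have ea := sqr_sqrtr u0; have eb := sqr_sqrtr v0.
move: ha hb ea eb; set a := Num.sqrt u; set b := Num.sqrt v => ha hb ea eb.
have a0 : 0 < a by lra.
have b0 : 0 < b by lra.
have eq1 : a^-1 - b^-1 = (b - a) * (a * b)^-1.
  by field; rewrite gt_eqF // gt_eqF.
have eq2 : u - v = (a - b) * (a + b) by rewrite -ea -eb; ring.
rewrite eq1 eq2 !normrM (ger0_norm (x := (a * b)^-1)); last first.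
  by rewrite invr_ge0 mulr_ge0 // ltW.
rewrite (ger0_norm (x := a + b)); last lra.
rewrite distrC; set t := `|a - b|.
have t0 : 0 <= t by exact: normr_ge0.
rewrite -subr_ge0.
have C3 : 0 < C1 ^+ 3 by rewrite exprn_gt0.
have E : (C1 ^+ 3)^-1 * (t * (a + b)) - t * (a * b)^-1 =
    t * (a * b)^-1 * (C1 ^+ 3)^-1 * ((a + b) * (a * b) - C1 ^+ 3).
  by field; rewrite ?gt_eqF // ?mulr_gt0 //; apply/andP; split; rewrite gt_eqF.
rewrite E; apply: mulr_ge0; first apply: mulr_ge0; first apply: mulr_ge0 => //.
- by rewrite invr_ge0 mulr_ge0 // ltW.
- by rewrite invr_ge0 ltW.
- rewrite subr_ge0.
  have hab : C1 ^+ 2 <= a * b by rewrite expr2; apply: ler_pM => //; lra.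
  have : C1 ^+ 3 = C1 ^+ 2 * C1 by rewrite exprSr.
  nra.
Qed.
End P5.

Section P6.
Context {R : realType}.
Local Notation mu := (@lebesgue_measure R).
Implicit Types (x t u B X : R).

Lemma mainM (qr qi dqr dqi yr yi pr pi : R -> R) (C1 C2 : R) (N : set R) :
  0 < C1 -> 0 < C2 ->
  (forall B, 0 < B -> abs_cont_on 0 B qr) -> (forall B, 0 < B -> abs_cont_on 0 B qi) ->
  (forall B, 0 < B -> abs_cont_on 0 B yr) -> (forall B, 0 < B -> abs_cont_on 0 B yi) ->
  (forall B, 0 < B -> abs_cont_on 0 B pr) -> (forall B, 0 < B -> abs_cont_on 0 B pi) ->
  measurable N -> mu N = 0%E ->
  (forall x, 0 <= x -> ~ N x ->
     [/\ C1 < Num.sqrt (qr x ^+ 2 + qi x ^+ 2),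
         is_derive x 1 qr (dqr x), is_derive x 1 qi (dqi x) &
         Num.sqrt (dqr x ^+ 2 + dqi x ^+ 2) <
           C2 * (Num.sqrt (qr x ^+ 2 + qi x ^+ 2) *
                 Num.sqrt (Num.sqrt (qr x ^+ 2 + qi x ^+ 2)))]) ->
  (forall x, 0 <= x -> ~ N x ->
     [/\ is_derive x 1 yr (pr x), is_derive x 1 yi (pi x),
         is_derive x 1 pr (qr x * yr x - qi x * yi x) &
         is_derive x 1 pi (qr x * yi x + qi x * yr x)]) ->
  (\int[mu]_(x in `[0%R, +oo[) ((yr x ^+ 2 + yi x ^+ 2)%:E) < +oo)%E ->
  (\int[mu]_(x in `[0%R, +oo[)
     (((pr x ^+ 2 + pi x ^+ 2) / Num.sqrt (qr x ^+ 2 + qi x ^+ 2))%:E) < +oo)%E.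
Proof.
move=> C10 C20 aqr aqi ayr ayi apr api mN N0 hq hy L2.
have slb : forall x, 0 <= x -> C1 ^+ 2 <= qr x ^+ 2 + qi x ^+ 2.
  by apply: (lowerbound C10 aqr aqi mN N0) => x x0 nN; case: (hq x x0 nN).
have C1sq : 0 < C1 ^+ 2 by rewrite exprn_gt0.
have clE : forall x, 0 <= x -> cl x = x by move=> x x0; rewrite /cl (max_l x0).
have cl0 : forall x, 0 <= cl x by move=> x; rewrite /cl le_max lexx orbT.
pose sC x := qr (cl x) ^+ 2 + qi (cl x) ^+ 2.
have sCpos : forall x, C1 ^+ 2 <= sC x by move=> x; exact: slb.
have csC : continuous sC.
  move=> t.
  have h1 : {for t, continuous (fun t => qr (cl t) ^+ 2)} by apply: cont_sq; apply: cont_clamp.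
  have h2 : {for t, continuous (fun t => qi (cl t) ^+ 2)} by apply: cont_sq; apply: cont_clamp.
  exact: (cvgD h1 h2).
pose hC x := (pr (cl x) ^+ 2 + pi (cl x) ^+ 2) / Num.sqrt (sC x).
have chC : continuous hC.
  move=> t.
  have h1 : {for t, continuous (fun t => pr (cl t) ^+ 2)} by apply: cont_sq; apply: cont_clamp.
  have h2 : {for t, continuous (fun t => pi (cl t) ^+ 2)} by apply: cont_sq; apply: cont_clamp.
  have h3 : {for t, continuous (fun t => Num.sqrt (sC t))}.
    exact: (continuous_comp (csC t) (@sqrt_continuous R (sC t))).
  have h4 : {for t, continuous (fun t => (Num.sqrt (sC t))^-1)}.
    apply: (cvgV _ h3); rewrite sqrtr_eq0 -ltNge; have := sCpos t; lra.
  exact: (cvgM (cvgD h1 h2) h4).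
have hC0 : forall x, 0 <= hC x.
  by move=> x; rewrite /hC divr_ge0 // ?sqrtr_ge0 // addr_ge0 // sqr_ge0.
pose gC x := yr (cl x) ^+ 2 + yi (cl x) ^+ 2.
have cgC : continuous gC.
  move=> t.
  have h1 : {for t, continuous (fun t => yr (cl t) ^+ 2)} by apply: cont_sq; apply: cont_clamp.
  have h2 : {for t, continuous (fun t => yi (cl t) ^+ 2)} by apply: cont_sq; apply: cont_clamp.
  exact: (cvgD h1 h2).
have gC0 : forall x, 0 <= gC x by move=> x; rewrite /gC addr_ge0 // sqr_ge0.
pose H := Kint hC; pose Y := Kint gC.
set Lb := (\int[mu]_(x in `[0%R, +oo[) ((yr x ^+ 2 + yi x ^+ 2)%:E))%E in L2.
have Lb0 : (0 <= Lb)%E by apply: integral_ge0 => x _; rewrite lee_fin addr_ge0 ?sqr_ge0.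
pose L := fine Lb.
have LbE : Lb = L%:E by rewrite /L fineK // ge0_fin_numE.
have YL : forall B, 0 <= B -> Y B <= L.
  move=> B B0; rewrite -lee_fin kint_E // -LbE.
  have -> : Lb = (\int[mu]_(x in `[0%R, +oo[) (gC x)%:E)%E.
    apply: eq_integral => x; rewrite inE /= in_itv /= andbT => x0.
    by rewrite /gC clE.
  apply: ge0_subset_integral => //.
  - apply/measurable_EFinP; apply: measurable_funS (continuous_measurable_fun cgC) => //.
  - by move=> x _; rewrite lee_fin.
  - by move=> x; rewrite /= !in_itv /= => /andP[-> _].
pose sq := Num.sqrt \o (qr * qr + qi * qi).
pose w := fun t => (sq t)^-1.
pose Rf := pr * yr + pi * yi.
pose Psi := ((3 / 4) \*: H) - (w * Rf) - ((C2 ^+ 2 + 1) \*: Y).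
have acw : forall B, 0 < B -> abs_cont_on 0 B w.
  move=> B B0.
  have acs : abs_cont_on 0 B (fun t => qr t * qr t + qi t * qi t).
    exact: (ac_add (ac_mul (aqr B B0) (aqr B B0)) (ac_mul (aqi B B0) (aqi B B0))).
  have C3 : 0 < (C1 ^+ 3)^-1 by rewrite invr_gt0 exprn_gt0.
  have := ac_comp (phi := fun u => (Num.sqrt u)^-1) (S := [set u | C1 ^+ 2 <= u]) C3 acs.
  apply.
  - by move=> x /andP[x0 _] /=; rewrite -!expr2; apply: slb.
  - by move=> u v /= hu hv; apply: invsqrt_lip.
have acR : forall B, 0 < B -> abs_cont_on 0 B Rf.
  move=> B B0.
  exact: (ac_add (ac_mul (apr B B0) (ayr B B0)) (ac_mul (api B B0) (ayi B B0))).
have acPsi : forall B, 0 < B -> abs_cont_on 0 B Psi.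
  move=> B B0; have acH := kint_ac chC hC0 B0; have acY := kint_ac cgC gC0 B0.
  exact: (ac_add (ac_add (ac_scale (3/4) acH) (ac_opp (ac_mul (acw B B0) (acR B B0))))
           (ac_opp (ac_scale (C2 ^+ 2 + 1) acY))).
have dPsi : forall x, 0 < x -> ~ N x -> exists2 d, d <= 0 & is_derive x 1 Psi d.
  move=> x x0 nN.
  have [hc1 dr di hb] := hq x (ltW x0) nN.
  have [dyr dyi dpr dpi] := hy x (ltW x0) nN.
  have spos : 0 < qr x ^+ 2 + qi x ^+ 2 by have := slb x (ltW x0); lra.
  have D1 := is_deriveD (is_deriveM dr dr) (is_deriveM di di).
  have D2 := is_derive1_comp (f := Num.sqrt) (g := qr * qr + qi * qi) (is_derive1_sqrt spos) D1.
  have sn : sq x != 0 by rewrite /sq /= sqrtr_eq0 -ltNge -!expr2.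
  have D3 := is_deriveV sn D2.
  have DR := is_deriveD (is_deriveM dpr dyr) (is_deriveM dpi dyi).
  have DwR := is_deriveM D3 DR.
  have DH := kint_derive chC x0; have DY := kint_derive cgC x0.
  have DP := is_deriveB (is_deriveB (is_deriveZ (3/4) DH) DwR) (is_deriveZ (C2 ^+ 2 + 1) DY).
  eexists; last exact: DP.
  rewrite /GRing.scale /=.
  have -> : (pr * yr + pi * yi) x = pr x * yr x + pi x * yi x by [].
  have -> : sq x = Num.sqrt (qr x ^+ 2 + qi x ^+ 2) by rewrite /sq /= -!expr2.
  rewrite /hC /gC /sC !clE ?(ltW x0) //.
  move: hb; set a := Num.sqrt (qr x ^+ 2 + qi x ^+ 2) => hb.
  have a0 : 0 < a by rewrite sqrtr_gt0.
  have wa : a^-1 * a = 1 by rewrite mulVf // gt_eqF.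
  have a2 : a ^+ 2 = qr x ^+ 2 + qi x ^+ 2 by rewrite sqr_sqrtr // ltW.
  have hm : dqr x ^+ 2 + dqi x ^+ 2 <= C2 ^+ 2 * a ^+ 3.
    move: hb; set m := dqr x ^+ 2 + dqi x ^+ 2 => hb.
    have m0 : 0 <= m by rewrite /m addr_ge0 // sqr_ge0.
    have sm0 := sqrtr_ge0 m; have sa0 := sqrtr_ge0 a.
    have em := sqr_sqrtr m0; have ea := sqr_sqrtr (ltW a0).
    move: hb sm0 sa0 em ea; set sm := Num.sqrt m; set sa := Num.sqrt a => hb sm0 sa0 em ea.
    have Z0 : 0 <= C2 * (a * sa) by rewrite mulr_ge0 ?mulr_ge0 // ?ltW.
    have : sm ^+ 2 <= (C2 * (a * sa)) ^+ 2 by rewrite ler_sqr //; apply: ltW.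
    have -> : (C2 * (a * sa)) ^+ 2 = C2 ^+ 2 * a ^+ 2 * sa ^+ 2 by ring.
    rewrite em ea; have -> : C2 ^+ 2 * a ^+ 2 * a = C2 ^+ 2 * a ^+ 3 by ring.
    by [].
  have key := poly_ineq (yr x) (yi x) (pr x) (pi x) a0 wa a2 hm.
  apply: (le_trans _ key); rewrite le_eqVlt; apply/orP; left; apply/eqP.
  by field; rewrite gt_eqF.
have PsiB : forall B, 0 < B -> Psi B <= Psi 0.
  move=> B B0; apply: (ac_nonincr (ltW B0) (acPsi B B0) mN N0) => x /andP[x0 _] nN.
  exact: dPsi.
have PsiE : forall t, Psi t = 3 / 4 * H t - w t * Rf t - (C2 ^+ 2 + 1) * Y t by [].
pose A := Psi 0 + (C2 ^+ 2 + 1) * L.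
have main1 : forall B, 0 < B -> 3 / 4 * H B - A <= w B * Rf B.
  move=> B B0; have hP := PsiB B B0; have hY := YL B (ltW B0).
  have c0 : 0 < C2 ^+ 2 + 1 by have := sqr_ge0 C2; lra.
  rewrite (PsiE B) in hP.
  have : (C2 ^+ 2 + 1) * Y B <= (C2 ^+ 2 + 1) * L by rewrite ler_pM2l.
  rewrite /A; lra.
have RfE : forall t, Rf t = pr t * yr t + pi t * yi t by [].
have Hbound : forall B, 0 < B -> H B <= 4 / 3 * (A + 1).
  move=> B B0; rewrite leNgt; apply/negP => hB.
  have wR1 : forall x, B <= x -> 1 <= w x * Rf x.
    move=> x Bx; have x0 : 0 < x by lra.
    have := main1 x x0; have := kint_mono chC hC0 (ltW B0) Bx.
    rewrite -/H; lra.
  have RC1 : forall x, B <= x -> C1 <= Rf x.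
    move=> x Bx; have x0 : 0 <= x by lra.
    have := wR1 x Bx.
    have hsq : w x = (Num.sqrt (qr x ^+ 2 + qi x ^+ 2))^-1 by rewrite /w /sq /= -!expr2.
    rewrite hsq; have := sqrt_lb C10 (slb x x0).
    set a := Num.sqrt _ => Ca h1.
    have a0 : 0 < a by lra.
    have : a * (a^-1 * Rf x) = Rf x by rewrite mulrA mulfV ?mul1r // gt_eqF.
    nra.
  have Glow : forall X, B <= X -> 2 * C1 * (X - B) <= yr X ^+ 2 + yi X ^+ 2.
    move=> X; rewrite le_eqVlt => /orP[/eqP <-|BX].
      by rewrite subrr mulr0 addr_ge0 // sqr_ge0.
    have X0 : 0 < X by lra.
    pose f1 := (2 * C1) \*: (@id R) - (yr * yr + yi * yi).
    have af1 : abs_cont_on B X f1.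
      apply: (ac_sub (a := 0) (b := X)) => //; first lra.
      exact: (ac_add (ac_scale (2 * C1) (ac_id 0 X))
        (ac_opp (ac_add (ac_mul (ayr X X0) (ayr X X0)) (ac_mul (ayi X X0) (ayi X X0))))).
    have hd : forall x, B < x < X -> ~ N x -> exists2 d, d <= 0 & is_derive x 1 f1 d.
      move=> x /andP[Bx xX] nN; have [dyr dyi _ _] := hy x ltac:(lra) nN.
      have D := is_deriveB (is_deriveZ (2 * C1) (is_derive_id x 1))
        (is_deriveD (is_deriveM dyr dyr) (is_deriveM dyi dyi)).
      eexists; last exact: D.
      rewrite /GRing.scale /=; have := RC1 x (ltW Bx); rewrite RfE.
      lra.
    have f1E : forall t, f1 t = 2 * C1 * t - (yr t * yr t + yi t * yi t) by [].
    have := ac_nonincr (ltW BX) af1 mN N0 hd.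
    rewrite !f1E -!expr2.
    have := sqr_ge0 (yr B); have := sqr_ge0 (yi B); lra.
  have Ylow : forall X, B + 1 <= X -> 2 * C1 * (X - B - 1) <= Y X.
    move=> X BX; have X0 : 0 < X by lra.
    pose f2 := (2 * C1) \*: (@id R) - Y.
    have af2 : abs_cont_on (B + 1) X f2.
      apply: (ac_sub (a := 0) (b := X)) => //; first lra.
      exact: (ac_add (ac_scale (2 * C1) (ac_id 0 X)) (ac_opp (kint_ac cgC gC0 X0))).
    have hd : forall x, B + 1 < x < X -> ~ N x -> exists2 d, d <= 0 & is_derive x 1 f2 d.
      move=> x /andP[Bx xX] nN.
      have D := is_deriveB (is_deriveZ (2 * C1) (is_derive_id x 1))
        (kint_derive cgC (x := x) ltac:(lra)).
      eexists; last exact: D.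
      rewrite /GRing.scale /= /gC clE; last lra.
      have := Glow x ltac:(lra).
      have : 2 * C1 <= 2 * C1 * (x - B) by nra.
      lra.
    have f2E : forall t, f2 t = 2 * C1 * t - Y t by [].
    have := ac_nonincr BX af2 mN N0 hd.
    rewrite !f2E.
    have := kint_ge0 (B + 1) gC0; rewrite -/Y.
    lra.
  have L0 : 0 <= L by rewrite /L fine_ge0.
  pose X := B + 2 + L / (2 * C1).
  have LX : 0 <= L / (2 * C1) by rewrite divr_ge0 // mulr_ge0 // ltW.
  have h1 := Ylow X ltac:(rewrite /X; lra).
  have h2 := YL X ltac:(rewrite /X; lra).
  have e : 2 * C1 * (X - B - 1) = 2 * C1 + L.
    by rewrite /X; field; rewrite gt_eqF.
  lra.
have conv := ge0_cvgn_integral (mu := mu) hC0 (continuous_measurable_fun chC).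
have -> : (\int[mu]_(x in `[0%R, +oo[)
     (((pr x ^+ 2 + pi x ^+ 2) / Num.sqrt (qr x ^+ 2 + qi x ^+ 2))%:E))%E =
    (\int[mu]_(x in `[0%R, +oo[) (hC x)%:E)%E.
  apply: eq_integral => x; rewrite inE /= in_itv /= andbT => x0.
  by rewrite /hC /sC clE.
apply: (le_lt_trans _ (ltry (4 / 3 * (A + 1)))).
rewrite -(cvg_lim _ conv) //.
apply: lime_le; first by apply/cvg_ex; eexists; exact: conv.
near=> n.
rewrite -kint_E // lee_fin; apply: Hbound.
have : (0 < n)%N by near: n; exists 1%N.
by move=> n0; rewrite ltr0n.
Unshelve. all: by end_near.
Qed.

End P6.

Lemma ReM {R : realType} (z w : R[i]) :
  complex.Re (z * w) = complex.Re z * complex.Re w - complex.Im z * complex.Im w.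
Proof. by case: z => a b; case: w => c d. Qed.

Lemma ImM {R : realType} (z w : R[i]) :
  complex.Im (z * w) = complex.Re z * complex.Im w + complex.Im z * complex.Re w.
Proof. by case: z => a b; case: w => c d /=; rewrite addrC. Qed.

Lemma ReMr {R : realType} (z : R[i]) (r : R) : complex.Re (z * (r%:C)%C) = complex.Re z * r.
Proof. by case: z => a b /=; rewrite mulr0 subr0. Qed.

Lemma ImMr {R : realType} (z : R[i]) (r : R) : complex.Im (z * (r%:C)%C) = complex.Im z * r.
Proof. by case: z => a b /=; rewrite mulr0 add0r. Qed.

Lemma meas_from {R : realType} (f g : R -> R) : continuous g ->
  (forall x, 0 <= x -> f x = g x) -> measurable_fun `[(0%R:R), +oo[ f.
Proof.
move=> gc fg; apply: (eq_measurable_fun g).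
  by move=> x; rewrite inE /= in_itv /= andbT => x0; rewrite fg.
exact: measurable_funS (continuous_measurable_fun gc).
Qed.

Lemma cont_invsqrt2 {R : realType} (qr qi pr : R -> R) (C1 : R) : 0 < C1 ->
  (forall B, 0 < B -> abs_cont_on 0 B qr) -> (forall B, 0 < B -> abs_cont_on 0 B qi) ->
  (forall B, 0 < B -> abs_cont_on 0 B pr) ->
  (forall x, 0 <= x -> C1 ^+ 2 <= qr x ^+ 2 + qi x ^+ 2) ->
  continuous (fun x => pr (cl x) *
     (Num.sqrt (Num.sqrt (qr (cl x) ^+ 2 + qi (cl x) ^+ 2)))^-1).
Proof.
move=> C10 aqr aqi apr slb t.
have cl0 : forall x : R, 0 <= cl x by move=> x; rewrite /cl le_max lexx orbT.
pose sC x := qr (cl x) ^+ 2 + qi (cl x) ^+ 2.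
have csC : {for t, continuous sC}.
  have h1 : {for t, continuous (fun t => qr (cl t) ^+ 2)} by apply: cont_sq; apply: cont_clamp.
  have h2 : {for t, continuous (fun t => qi (cl t) ^+ 2)} by apply: cont_sq; apply: cont_clamp.
  exact: (cvgD h1 h2).
have h3 : {for t, continuous (fun t => Num.sqrt (Num.sqrt (sC t)))}.
  exact: (continuous_comp (continuous_comp csC (@sqrt_continuous R (sC t)))
            (@sqrt_continuous R _)).
have hp : {for t, continuous (fun t => pr (cl t))} by apply: cont_clamp.
have nz : Num.sqrt (Num.sqrt (sC t)) != 0.
  rewrite sqrtr_eq0 -ltNge sqrtr_gt0.
  have := slb (cl t) (cl0 t); have : 0 < C1 ^+ 2 by rewrite exprn_gt0.
  rewrite /sC; lra.
exact: (cvgM hp (cvgV nz h3)).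
Qed.

Unset Implicit Arguments. Set Strict Implicit.

Theorem lemma2 (R : realType) (q dq : R -> R[i]) (C1 C2 : R) :
  AC_loc_Rplus q ->
  0 < C1 -> 0 < C2 ->
  {ae @lebesgue_measure R, forall x, 0 <= x ->
     C1 < cabs (q x) /\ cderiv_at q x (dq x) /\
     cabs (dq x) < C2 * (cabs (q x) * Num.sqrt (cabs (q x)))} ->
  forall y dy : R -> R[i],
    AC_loc_Rplus y -> AC_loc_Rplus dy ->
    {ae @lebesgue_measure R, forall x, 0 <= x ->
       cderiv_at y x (dy x) /\ cderiv_at dy x (q x * y x)} ->
    L2_Rplus y ->
    L2_Rplus (fun x => dy x * ((Num.sqrt (cabs (q x)))^-1)%:C%C).
Proof.
move=> acq C10 C20 hq y dy acy acdy hy L2y.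
pose qr t := complex.Re (q t); pose qi t := complex.Im (q t).
pose dqr t := complex.Re (dq t); pose dqi t := complex.Im (dq t).
pose yr t := complex.Re (y t); pose yi t := complex.Im (y t).
pose pr t := complex.Re (dy t); pose pi t := complex.Im (dy t).
have aqr : forall B, 0 < B -> abs_cont_on 0 B qr by move=> B B0; case: (acq B B0).
have aqi : forall B, 0 < B -> abs_cont_on 0 B qi by move=> B B0; case: (acq B B0).
have ayr : forall B, 0 < B -> abs_cont_on 0 B yr by move=> B B0; case: (acy B B0).
have ayi : forall B, 0 < B -> abs_cont_on 0 B yi by move=> B B0; case: (acy B B0).
have apr : forall B, 0 < B -> abs_cont_on 0 B pr by move=> B B0; case: (acdy B B0).
have api : forall B, 0 < B -> abs_cont_on 0 B pi by move=> B B0; case: (acdy B B0).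
case: hq => [A1 [mA1 A10 sA1]].
case: hy => [A2 [mA2 A20 sA2]].
pose N := A1 `|` A2.
have mN : measurable N by exact: measurableU.
have N0 : lebesgue_measure N = 0%E.
  apply/eqP; rewrite eq_le measure_ge0 andbT.
  have h0 : (lebesgue_measure A1 + lebesgue_measure A2 <= 0)%E by rewrite A10 A20 adde0.
  exact: (le_trans (measureU2 lebesgue_measure mA1 mA2) h0).
have hq' : forall x, 0 <= x -> ~ N x ->
     [/\ C1 < Num.sqrt (qr x ^+ 2 + qi x ^+ 2),
         is_derive x 1 qr (dqr x), is_derive x 1 qi (dqi x) &
         Num.sqrt (dqr x ^+ 2 + dqi x ^+ 2) <
           C2 * (Num.sqrt (qr x ^+ 2 + qi x ^+ 2) *
                 Num.sqrt (Num.sqrt (qr x ^+ 2 + qi x ^+ 2)))].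
  move=> x x0 nN.
  have [P|nP] := pselect (0 <= x ->
     C1 < cabs (q x) /\ cderiv_at q x (dq x) /\
     cabs (dq x) < C2 * (cabs (q x) * Num.sqrt (cabs (q x)))); last first.
    by exfalso; apply: nN; left; exact: sA1.
  have [hc [[dr di] hb]] := P x0.
  by split.
have hy' : forall x, 0 <= x -> ~ N x ->
     [/\ is_derive x 1 yr (pr x), is_derive x 1 yi (pi x),
         is_derive x 1 pr (qr x * yr x - qi x * yi x) &
         is_derive x 1 pi (qr x * yi x + qi x * yr x)].
  move=> x x0 nN.
  have [P|nP] := pselect (0 <= x ->
       cderiv_at y x (dy x) /\ cderiv_at dy x (q x * y x)); last first.
    by exfalso; apply: nN; right; exact: sA2.
  have [[d1 d2] [d3 d4]] := P x0.
  split => //.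
  - by rewrite /qr /yr /qi /yi -ReM.
  - by rewrite /qr /yr /qi /yi -ImM.
case: L2y => _ [_ L2].
have L2' : (\int[lebesgue_measure]_(x in `[0%R, +oo[) ((yr x ^+ 2 + yi x ^+ 2)%:E) < +oo)%E.
  have E : (\int[lebesgue_measure]_(x in `[0%R, +oo[) ((cabs (y x)) ^+ 2)%:E)%E =
      (\int[lebesgue_measure]_(x in `[0%R, +oo[) ((yr x ^+ 2 + yi x ^+ 2)%:E))%E.
    apply: eq_integral => x _.
    by rewrite /cabs sqr_sqrtr // addr_ge0 // sqr_ge0.
  by rewrite -E.
have M := mainM C10 C20 aqr aqi ayr ayi apr api mN N0 hq' hy' L2'.
have slb : forall x, 0 <= x -> C1 ^+ 2 <= qr x ^+ 2 + qi x ^+ 2.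
  by apply: (lowerbound C10 aqr aqi mN N0) => x x0 nN; case: (hq' x x0 nN).
have clE : forall x : R, 0 <= x -> cl x = x by move=> x x0; rewrite /cl (max_l x0).
split; [|split].
- apply: (@meas_from R _ _ (@cont_invsqrt2 R qr qi pr C1 C10 aqr aqi apr slb)) => x x0.
  by rewrite ReMr clE.
- apply: (@meas_from R _ _ (@cont_invsqrt2 R qr qi pi C1 C10 aqr aqi api slb)) => x x0.
  by rewrite ImMr clE.
- move: M; set I1 := (X in (X < _)%E -> _) => M.
  suff -> : (\int[lebesgue_measure]_(x in `[0%R, +oo[) ((cabs (dy x *
     ((Num.sqrt (cabs (q x)))^-1)%:C%C)) ^+ 2)%:E)%E = I1 by [].
  apply: eq_integral => x _; congr (_%:E).
  rewrite /cabs ReMr ImMr sqr_sqrtr; last by rewrite addr_ge0 // sqr_ge0.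
  set s := complex.Re (q x) ^+ 2 + complex.Im (q x) ^+ 2.
  have s0 : 0 <= Num.sqrt s by exact: sqrtr_ge0.
  have e : (Num.sqrt (Num.sqrt s))^-1 ^+ 2 = (Num.sqrt s)^-1.
    by rewrite exprVn sqr_sqrtr.
  rewrite !exprMn e /pr /pi; ring.
Qed.
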